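(* Fix $M>0$. If $c,d\in\ell_{\infty,M}(X^\ast,\mathbb{K}^\ell)$, then for every $\epsilon>0$, with $M_\epsilon=M(1+\epsilon)$, one has $c\sqcup\!\sqcup\, d\in \ell_{\infty,M_\epsilon}(X^\ast,\mathbb{K}^\ell)$ and $$\|c\sqcup\!\sqcup\, d\|_{\ell_\infty,M_\epsilon}\leq K_\epsilon\,\|c\|_{\ell_\infty,M}\,\|d\|_{\ell_\infty,M},$$ where $K_\epsilon=\sup_{\eta\in X^\ast}(|\eta|+1)/(1+\epsilon)^{|\eta|}$, and moreover $K_\epsilon\leq \hat K_\epsilon:=e^{-1}(1+\epsilon)/\log(1+\epsilon)$.
   Context: $\mathbb{K}\in\{\mathbb{R},\mathbb{C}\}$. $X=\{x_0,x_1,\ldots,x_m\}$ is a finite alphabet of noncommuting letters, $X^\ast$ the set of words (finite sequences of letters, including the empty word $\emptyset$), $|\eta|$ the length of a word. A formal power series is a map $c\colon X^\ast\to\mathbb{K}^\ell$, written $c=\sum_\eta (c,\eta)\eta$; the set of these is $\mathbb{K}^\ell\langle\langle X\rangle\rangle$. The shuffle product $\sqcup\!\sqcup$ is the bilinear product determined on words by $(x_i\eta)\sqcup\!\sqcup(x_j\xi)=x_i(\eta\sqcup\!\sqcup(x_j\xi))+x_j((x_i\eta)\sqcup\!\sqcup\xi)$, $\eta\sqcup\!\sqcup\emptyset=\emptyset\sqcup\!\sqcup\eta=\eta$, extended to series by $(c\sqcup\!\sqcup d,\eta)=\sum_{\nu,\xi}(c,\nu)(d,\xi)(\nu\sqcup\!\sqcup\xi,\eta)$,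 and componentwise for $\mathbb{K}^\ell$-valued series. For $M>0$ and $c\in\mathbb{K}^\ell\langle\langle X\rangle\rangle$ put $\|c\|_{\ell_\infty,M}=\sup_{\eta\in X^\ast}|(c,\eta)|/(M^{|\eta|}|\eta|!)\in[0,\infty]$, where $|z|=\max_i|z_i|$ for $z\in\mathbb{K}^\ell$; $\ell_{\infty,M}(X^\ast,\mathbb{K}^\ell)$ is the Banach space of all $c$ with $\|c\|_{\ell_\infty,M}<\infty$. *)

(* Defs.v *)
From HB Require Import structures.
From mathcomp Require Import all_boot all_order all_algebra.
From mathcomp Require Import all_classical all_reals all_analysis.
From mathcomp Require Import complex.
Set Implicit Arguments. Unset Strict Implicit. Unset Printing Implicit Defensive.
Import Order.TTheory GRing.Theory Num.Theory.
Local Open Scope ring_scope.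

(* Alphabet X = {x_0,...,x_m} is 'I_(m.+1); words are seq 'I_(m.+1);
   |eta| = size eta. *)

(* shuffle of two words, as a multiset (list) of words:
   (x_i u) sh (x_j v) = x_i (u sh x_j v) + x_j (x_i u sh v),
   u sh [::] = [::] sh u = u. *)
Fixpoint shw {A : Type} (u v : seq A) {struct u} : seq (seq A) :=
  match u with
  | [::] => [:: v]
  | a :: u' =>
      let fix shw_r (v : seq A) : seq (seq A) :=
        match v with
        | [::] => [:: u]
        | b :: v' => map (cons a) (shw u' v) ++ map (cons b) (shw_r v')
        end in
      shw_r v
  end.

Definition shcoef {A : eqType} (nu xi eta : seq A) : nat := count_mem eta (shw nu xi).

Definition series (m l : nat) (K : Type) := seq 'I_m.+1 -> 'I_l -> K.

(* Only words with |nu| + |xi| = |eta| can have (nu sh xi, eta) <> 0, so the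
   sum is taken over all pairs of words of lengths k and |eta| - k. *)
Definition shuffle (m l : nat) (K : nzSemiRingType) (c d : series m l K) : series m l K :=
  fun eta i =>
    \sum_(k < (size eta).+1)
      \sum_(nu : k.-tuple 'I_m.+1)
        \sum_(xi : (size eta - k).-tuple 'I_m.+1)
           (c nu i * d xi i) *+ shcoef (nu : seq _) (xi : seq _) eta.

Definition vnorm (R : realType) (l : nat) (K : Type) (nrm : K -> R) (z : 'I_l -> K) : R :=
  \big[Num.max/0]_(i < l) nrm (z i).

Definition linf_norm (R : realType) (m l : nat) (K : Type) (nrm : K -> R)
    (M : R) (c : series m l K) : \bar R :=
  ereal_sup (range (fun eta : seq 'I_m.+1 =>
     (vnorm nrm (c eta) / (M ^+ size eta * (size eta)`!%:R))%:E)).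

Definition Keps (R : realType) (m : nat) (eps : R) : \bar R :=
  ereal_sup (range (fun eta : seq 'I_m.+1 =>
     ((size eta).+1%:R / (1 + eps) ^+ size eta)%:E)).

Definition Khat (R : realType) (eps : R) : R :=
  expR (-1) * (1 + eps) / ln (1 + eps).

Definition lemma3p3_for (R : realType) (K : nzSemiRingType) (nrm : K -> R) : Prop :=
  forall (m l : nat) (M : R), 0 < M ->
  forall c d : series m l K,
    (linf_norm nrm M c < +oo)%E -> (linf_norm nrm M d < +oo)%E ->
  forall eps : R, 0 < eps ->
    let Me := M * (1 + eps) in
    [/\ (linf_norm nrm Me (shuffle c d) < +oo)%E,
        (linf_norm nrm Me (shuffle c d) <= Keps m eps * linf_norm nrm M c * linf_norm nrm M d)%E
      & (Keps m eps <= (Khat eps)%:E)%E].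

(* Main.v *)
Require Import Defs.
From HB Require Import structures.
From mathcomp Require Import all_boot all_order all_algebra.
From mathcomp Require Import all_classical all_reals all_analysis.
From mathcomp Require Import complex.
Local Open Scope ring_scope.

From mathcomp Require Import ring lra.
Set Implicit Arguments. Unset Strict Implicit. Unset Printing Implicit Defensive.
Import Order.TTheory GRing.Theory Num.Theory.

Module Helpers.
Local Open Scope nat_scope.

Section Comb.
Variable T : finType.

Lemma shw_nil_r (u : seq T) : shw u [::] = [:: u].
Proof. by case: u. Qed.

Lemma shw_cons (a b : T) u v : shw (a::u) (b::v) =
  map (cons a) (shw u (b::v)) ++ map (cons b) (shw (a::u) v).
Proof. by []. Qed.

Lemma count_map_cons (a b : T) e s :
  count_mem (a::e) (map (cons b) s) = (b == a) * count_mem e s.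
Proof.
elim: s => [|x s IH] /=; first by rewrite muln0.
by rewrite IH eqseq_cons; case: (b == a); rewrite /= ?mul1n ?mul0n.
Qed.

Lemma sum_tupleS n (F : seq T -> nat) :
  \sum_(t : n.+1.-tuple T) F t = \sum_(x : T) \sum_(t : n.-tuple T) F (x :: t).
Proof.
rewrite pair_big /=.
rewrite (reindex (fun p : T * n.-tuple T => [tuple of p.1 :: p.2])) //=.
exists (fun t : n.+1.-tuple T => (thead t, behead_tuple t)).
  by move=> [x t] _ /=; congr pair; apply: val_inj.
move=> t _; apply: val_inj => /=.
by case: t => [[|x s] //= _].
Qed.

Lemma sum_tuple0 (F : seq T -> nat) :
  \sum_(t : 0.-tuple T) F t = F [::].
Proof.
by rewrite (big_pred1 [tuple]) // => t; rewrite [t]tuple0 /= ; symmetry; apply/eqP.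
Qed.

Lemma sum_tuple_eq n (eta : seq T) : size eta = n ->
  \sum_(t : n.-tuple T) (((t : seq T) == eta) : nat) = 1.
Proof.
move=> Hs.
have Ht : size eta == n by rewrite Hs.
rewrite (bigD1 (Tuple Ht)) //= eqxx big1 // => t Hne.
case: eqP => // Heq; case/negP: Hne; apply/eqP/val_inj => /=; exact: Heq.
Qed.

Lemma sum_ind (a : T) (G : T -> nat) : \sum_(c : T) (c == a) * G c = G a.
Proof.
by rewrite (bigD1 a) //= eqxx mul1n big1 ?addn0 // => c /negbTE ->.
Qed.

Lemma shcoef_base0 (eta : seq T) j : size eta = j ->
  \sum_(nu : 0.-tuple T) \sum_(xi : j.-tuple T) shcoef nu xi eta = 1.
Proof.
move=> Hs; rewrite (sum_tuple0 (fun s => \sum_(xi : j.-tuple T) shcoef s xi eta)).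
rewrite -(sum_tuple_eq Hs); apply: eq_bigr => xi _.
by rewrite /shcoef /= addn0.
Qed.

Lemma shcoef_base1 (eta : seq T) k : size eta = k ->
  \sum_(nu : k.-tuple T) \sum_(xi : 0.-tuple T) shcoef nu xi eta = 1.
Proof.
move=> Hs.
rewrite -(sum_tuple_eq Hs); apply: eq_bigr => nu _.
by rewrite (sum_tuple0 (fun s => shcoef nu s eta)) /shcoef shw_nil_r /= addn0.
Qed.

Lemma sum_shcoef (eta : seq T) : forall k j, size eta = k + j ->
  \sum_(nu : k.-tuple T) \sum_(xi : j.-tuple T) shcoef nu xi eta = 'C(k + j, k).
Proof.
elim: eta => [|a eta IH] [|k] [|j] Hs.
- by rewrite shcoef_base0.
- by rewrite shcoef_base0 // bin0.
- by rewrite addn0 in Hs *; rewrite shcoef_base1 // binn.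
- by rewrite addnS in Hs.
- by rewrite shcoef_base0 // bin0.
- by rewrite shcoef_base0 // bin0.
- by rewrite addn0 in Hs *; rewrite shcoef_base1 // binn.
move: Hs => /= /eqP; rewrite addSn eqSS => /eqP Hs.
rewrite (@sum_tupleS _ (fun s => \sum_(xi : j.+1.-tuple T) shcoef s xi (a :: eta))).
transitivity (\sum_(b : T) \sum_(nu : k.-tuple T)
   ((b == a) * (\sum_(xi : j.+1.-tuple T) shcoef nu xi eta)
    + \sum_(xi : j.-tuple T) shcoef (b :: nu) xi eta)).
  apply: eq_bigr => b _; apply: eq_bigr => nu _.
  rewrite (@sum_tupleS _ (fun s => shcoef (b :: nu) s (a :: eta))).
  under eq_bigr => c _ do under eq_bigr => xi _ do
    rewrite /shcoef shw_cons count_cat !count_map_cons.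
  under eq_bigr => c _ do rewrite big_split /=.
  rewrite big_split /=; congr addn.
    rewrite (@sum_tupleS _ (fun s => count_mem eta (shw nu s))) big_distrr /=.
    by apply: eq_bigr => c _; rewrite big_distrr.
  under eq_bigr => c _ do rewrite -big_distrr /=.
  by rewrite (sum_ind a (fun c => \sum_(i : j.-tuple T) count_mem eta (shw (b :: nu) i))).
under eq_bigr => b _ do rewrite big_split /=.
rewrite big_split /=.
under eq_bigr => b _ do rewrite -big_distrr /=.
rewrite (sum_ind a (fun _ => \sum_(i : k.-tuple T) \sum_(xi : j.+1.-tuple T) shcoef i xi eta)).
rewrite -(@sum_tupleS _ (fun s => \sum_(xi : j.-tuple T) shcoef s xi eta)).
rewrite IH; last by [].
rewrite IH; last by rewrite Hs addSn addnS.
by rewrite binS addnC addSn addnS.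
Qed.
End Comb.

Local Open Scope ring_scope.

Section Keps.
Variable R : realType.

Lemma Keps_term_le (eps : R) n : 0 < eps -> n.+1%:R / (1+eps)^+n <= Khat eps.
Proof.
move=> e0.
have h1 : 0 < 1 + eps by rewrite addr_gt0.
set a := ln (1 + eps).
have a0 : 0 < a by apply: ln_gt0; rewrite ltrDl.
have key : n.+1%:R * a <= expR (-1) * (1+eps)^+n.+1.
  have E : expR (n.+1%:R * a) = (1+eps)^+n.+1.
    by rewrite mulr_natl /a -lnXn // lnK // posrE exprn_gt0.
  have := expR_ge1Dx (n.+1%:R * a - 1).
  by rewrite addrC subrK expRD E mulrC [_ * expR _]mulrC; rewrite mulrC.
rewrite ler_pdivrMr ?exprn_gt0 //.
have -> : Khat eps * (1 + eps) ^+ n = (expR (-1) * (1+eps)^+n.+1) / a.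
  by rewrite /Khat exprS; ring.
by rewrite ler_pdivlMr.
Qed.

Lemma Keps_fin m (eps : R) : 0 < eps -> exists Ke : R,
  [/\ Keps m eps = Ke%:E, Ke <= Khat eps &
      forall eta : seq 'I_m.+1, (size eta).+1%:R / (1+eps)^+size eta <= Ke].
Proof.
move=> e0.
have Kb : (Keps m eps <= (Khat eps)%:E)%E.
  apply: ge_ereal_sup => _ [eta _ <-]; rewrite lee_fin; exact: Keps_term_le.
have hub : forall eta : seq 'I_m.+1,
    (((size eta).+1%:R / (1+eps)^+size eta)%:E <= Keps m eps)%E.
  by move=> eta; apply: ereal_sup_ubound; exists eta.
have K0 : (0 <= Keps m eps)%E.
  apply: le_trans (hub [::]); rewrite lee_fin /= expr0 divr1; exact: ler0n.
have fK : Keps m eps = (fine (Keps m eps))%:E.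
  by rewrite fineK // ge0_fin_numE // (le_lt_trans Kb) // ltey.
exists (fine (Keps m eps)); split => //.
  by rewrite -lee_fin -fK.
by move=> eta; rewrite -lee_fin -fK.
Qed.
End Keps.

Section Gen.
Variables (R : realType) (K : nzSemiRingType) (nrm : K -> R).
Hypothesis nrm0 : nrm 0 = 0.
Hypothesis nrm_ge0 : forall x, 0 <= nrm x.
Hypothesis nrmD : forall x y, nrm (x + y) <= nrm x + nrm y.
Hypothesis nrmM : forall x y, nrm (x * y) <= nrm x * nrm y.

Lemma nrm_sum (I : Type) (r : seq I) (P : pred I) (F : I -> K) :
  nrm (\sum_(i <- r | P i) F i) <= \sum_(i <- r | P i) nrm (F i).
Proof.
elim/big_rec2: _ => [|i y1 y2 _ IH]; first by rewrite nrm0.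
by apply: le_trans (nrmD _ _) _; rewrite lerD2l.
Qed.

Lemma nrmMn x n : nrm (x *+ n) <= nrm x *+ n.
Proof.
elim: n => [|n IH]; first by rewrite !mulr0n nrm0.
by rewrite !mulrS; apply: le_trans (nrmD _ _) _; rewrite lerD2l.
Qed.

Lemma vnorm_ge l (z : 'I_l -> K) i : nrm (z i) <= vnorm nrm z.
Proof. exact: le_bigmax. Qed.

Lemma vnorm_le l (z : 'I_l -> K) B : 0 <= B -> (forall i, nrm (z i) <= B) ->
  vnorm nrm z <= B.
Proof. by move=> B0 H; apply: bigmax_le. Qed.

Lemma vnorm_ge0 l (z : 'I_l -> K) : 0 <= vnorm nrm z.
Proof. exact: bigmax_ge_id. Qed.

Lemma linf_fin m l M (c : Defs.series m l K) : 0 < M ->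
  (linf_norm nrm M c < +oo)%E -> exists N : R,
  [/\ linf_norm nrm M c = N%:E, 0 <= N &
      forall eta i, nrm (c eta i) <= N * (M ^+ size eta * (size eta)`!%:R)].
Proof.
move=> M0 Hc.
have hub : forall eta, ((vnorm nrm (c eta) / (M ^+ size eta * (size eta)`!%:R))%:E
    <= linf_norm nrm M c)%E.
  by move=> eta; apply: ereal_sup_ubound; exists eta.
have S0 : (0 <= linf_norm nrm M c)%E.
  apply: le_trans (hub [::]); rewrite lee_fin.
  by apply: divr_ge0; [exact: vnorm_ge0 | rewrite /= expr0 mul1r ler0n].
have fS : linf_norm nrm M c = (fine (linf_norm nrm M c))%:E.
  by rewrite fineK // ge0_fin_numE.
exists (fine (linf_norm nrm M c)); split => //.
  by rewrite -lee_fin -fS.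
move=> eta i; have := hub eta; rewrite fS lee_fin ler_pdivrMr; last first.
  by rewrite mulr_gt0 ?exprn_gt0 ?ltr0n ?fact_gt0.
by apply: le_trans; exact: vnorm_ge.
Qed.

Lemma gen_main : lemma3p3_for nrm.
Proof.
move=> m l M M0 c d Hc Hd eps e0 Me.
have [Nc [Ec Nc0 hc]] := linf_fin M0 Hc.
have [Nd [Ed Nd0 hd]] := linf_fin M0 Hd.
have [Ke [EK KeK hK]] := Keps_fin m e0.
have Me0 : 0 < Me by rewrite /Me mulr_gt0 // addr_gt0.
have Ke0 : 0 <= Ke.
  by apply: le_trans (hK [::]); rewrite /= expr0 divr1 ler0n.
have key : forall eta, vnorm nrm (shuffle c d eta) / (Me ^+ size eta * (size eta)`!%:R)
    <= Ke * Nc * Nd.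
  move=> eta; set n := size eta.
  rewrite ler_pdivrMr; last by rewrite mulr_gt0 ?exprn_gt0 ?ltr0n ?fact_gt0.
  apply: vnorm_le.
    by rewrite !mulr_ge0 // ?exprn_ge0 ?ler0n // ltW.
  move=> i.
  apply: le_trans (_ : Nc * Nd * M ^+ n * n`!%:R * n.+1%:R <= _); last first.
    rewrite /Me exprMn.
    have -> : Ke * Nc * Nd * (M ^+ n * (1 + eps) ^+ n * n`!%:R)
        = Nc * Nd * M ^+ n * n`!%:R * (Ke * (1 + eps) ^+ n) by ring.
    apply: ler_wpM2l; first by rewrite !mulr_ge0 // ?exprn_ge0 ?ler0n // ltW.
    have := hK eta; rewrite ler_pdivrMr //.
    by rewrite exprn_gt0 // addr_gt0.
  have -> : Nc * Nd * M ^+ n * n`!%:R * n.+1%:R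
      = \sum_(k < n.+1) Nc * Nd * M ^+ n * n`!%:R.
    by rewrite sumr_const card_ord mulr_natr.
  rewrite /shuffle; apply: le_trans (nrm_sum _ _ _) _.
  apply: ler_sum => k _.
  have kn : (k <= n)%N by rewrite -ltnS.
  apply: le_trans (nrm_sum _ _ _) _.
  apply: le_trans (_ : \sum_(nu : k.-tuple 'I_m.+1) \sum_(xi : (n - k).-tuple 'I_m.+1)
     (Nc * (M ^+ k * k`!%:R)) * (Nd * (M ^+ (n - k) * (n - k)`!%:R))
       * (shcoef (nu : seq _) (xi : seq _) eta)%:R <= _).
    apply: ler_sum => nu _; apply: le_trans (nrm_sum _ _ _) _.
    apply: ler_sum => xi _.
    apply: le_trans (nrmMn _ _) _; rewrite -[nrm _ *+ _]mulr_natr.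
    apply: ler_wpM2r; first exact: ler0n.
    apply: le_trans (nrmM _ _) _.
    apply: ler_pM; [exact: nrm_ge0 | exact: nrm_ge0 | |].
      by have := hc nu i; rewrite size_tuple.
    by have := hd xi i; rewrite size_tuple.
  under eq_bigr => nu _ do rewrite -big_distrr /=.
  rewrite -big_distrr /=.
  under eq_bigr => nu _ do rewrite -natr_sum.
  rewrite -natr_sum sum_shcoef; last by rewrite subnKC.
  rewrite subnKC // -(bin_fact kn) !natrM.
  have -> : M ^+ n = M ^+ k * M ^+ (n - k) by rewrite -exprD subnKC.
  rewrite le_eqVlt; apply/orP; left; apply/eqP; ring.
have Hsup : (linf_norm nrm Me (shuffle c d) <= (Ke * Nc * Nd)%:E)%E.
  by apply: ge_ereal_sup => _ [eta _ <-]; rewrite lee_fin; exact: key.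
split.
- exact: le_lt_trans Hsup (ltey _).
- by rewrite EK Ec Ed -!EFinM.
- by rewrite EK lee_fin.
Qed.
End Gen.

End Helpers.
Import Helpers.

Theorem lemma3p3 :
  forall R : realType,
    lemma3p3_for (K := R) (fun x : R => `|x|) /\
    lemma3p3_for (K := complex.complex R) (@complex.ComplexField.Normc.normc R).
Proof.
move=> R; split.
  apply: gen_main.
  - exact: normr0.
  - exact: normr_ge0.
  - exact: ler_normD.
  - by move=> x y; rewrite normrM.
apply: gen_main.
- exact: complex.ComplexField.Normc.normc0.
- by case=> a b; rewrite /= sqrtr_ge0.
- exact: complex.le_normcD.
- by move=> x y; rewrite complex.ComplexField.Normc.normcM.
Qed.
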